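(* Let $n$ be odd and let $p$ be an odd prime with $p\nmid n$, $p\equiv\delta\pmod 4$ with $\delta\in\{1,-1\}$, and put $t=(p-\delta)/4$. Let $m$ be an odd positive integer with $pm\equiv1\pmod n$, and let $a_1,\dots,a_t$ be nonnegative integers such that $pa_1,\dots,pa_t$ are congruent mod $n$ to $1,3,\dots,(p-3)/2$ respectively if $\delta=1$, and to $0,2,\dots,(p-3)/2$ respectively if $\delta=-1$. Let $$H(x)=\frac{x^m+1}{x+1}\left(x^{a_1}+\cdots+x^{a_t}\right),\quad f=\delta+(x^n+1)H(x),\quad g=(x^n+1)H(x).$$ Then $M_{Q_{4n}}(f+yg)=\delta p$.
   Context: $Q_{4n}=\langle x,y : x^{2n}=1,\ y^2=x^n,\ xy=yx^{-1}\rangle$. For $f,g\in\mathbb Z[x]$, $M_{Q_{4n}}(f+yg)=\prod_{z^{2n}=1}\big(f(z)f(z^{-1})-z^ng(z)g(z^{-1})\big)$, which is the integer group determinant of $Q_{4n}$ with entries given by the coefficients of $f,g$ reduced mod $x^{2n}-1$. *)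

(* Defs.v *)
From HB Require Import structures.
From mathcomp Require Import all_boot all_order all_algebra all_field.
Set Implicit Arguments. Unset Strict Implicit. Unset Printing Implicit Defensive.
Import Order.TTheory GRing.Theory Num.Theory.
Local Open Scope ring_scope.

Definition evC (p : {poly int}) (z : algC) : algC :=
  (map_poly (fun c : int => c%:~R) p).[z].

(* M_{Q_{4n}}(f + y g) = prod_{z^{2n}=1} (f(z) f(z^-1) - z^n g(z) g(z^-1)),
   the product being taken over z = w^k, k < 2n, for a primitive
   2n-th root of unity w (so z ranges over all 2n-th roots of unity). *)
Definition MQ (n : nat) (w : algC) (f g : {poly int}) : algC :=
  \prod_(k < 2 * n)
    (let z := w ^+ k in
     evC f z * evC f z^-1 - z ^+ n * evC g z * evC g z^-1).

Definition Hpoly (m t : nat) (a : 'I_t -> nat) : {poly int} :=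
  (('X^m + 1) %/ ('X + 1)) * \sum_(i < t) 'X^(a i).

(* Main.v *)
Require Import Defs.
From HB Require Import structures.
From mathcomp Require Import all_boot all_order all_algebra all_field.
From mathcomp Require Import ring lra zify.
Import Order.TTheory GRing.Theory Num.Theory.
Local Open Scope ring_scope.
Set Implicit Arguments.

Definition Tsum (t e : nat) (x : algC) : algC := \sum_(i < t) x ^+ (2 * i + e).

Lemma Tsum_tel t e x : (x^+2 - 1) * Tsum t e x = (x ^+ (2*t) - 1) * x ^+ e.
Proof.
elim: t => [|t IH]; first by rewrite /Tsum big_ord0 mulr0 muln0 expr0 subrr mul0r.
rewrite /Tsum big_ord_recr /= mulrDr -/(Tsum t e x) IH.
rewrite mulnS !exprD.
set U := x ^+ (2 * t); set E := x ^+ e. ring.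
Qed.

Lemma Tsum_recl t e x : Tsum t.+1 e x = x ^+ e + x ^+ 2 * Tsum t e x.
Proof.
rewrite /Tsum big_ord_recl /= muln0 add0n mulr_sumr; congr (_ + _).
by apply: eq_bigr => i _; rewrite -exprD /bump /= add1n mulnS addnA.
Qed.

Lemma Tsum_inv t e x : x != 0 -> Tsum t e x^-1 * x ^+ (2*t + 2*e) = x^+2 * Tsum t e x.
Proof.
move=> x0; elim: t => [|t IH]; first by rewrite /Tsum !big_ord0 mul0r mulr0.
rewrite [Tsum t.+1 e x]Tsum_recl {1}/Tsum big_ord_recr /= -/(Tsum t e x^-1) mulrDl.
have -> : (2 * t.+1 + 2 * e = 2 + (2 * t + 2 * e))%N by rewrite mulnS addnA.
rewrite exprD mulrCA IH.
have -> : x ^+ 2 * x ^+ (2 * t + 2 * e) = x ^+ (2 * t + e) * (x ^+ 2 * x ^+ e).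
  by rewrite -!exprD; congr (_ ^+ _); lia.
rewrite !mulrA exprVn mulVf ?expf_neq0 ?mul1r; last by [].
ring. by [].
Qed.

Lemma evCD (p q : {poly int}) z : evC (p + q) z = evC p z + evC q z.
Proof. by rewrite /evC rmorphD /= hornerD. Qed.
Lemma evCM (p q : {poly int}) z : evC (p * q) z = evC p z * evC q z.
Proof. by rewrite /evC rmorphM /= hornerM. Qed.
Lemma evCXn k z : evC 'X^k z = z ^+ k.
Proof. by rewrite /evC map_polyXn hornerXn. Qed.
Lemma evC1 z : evC 1 z = 1.
Proof. by rewrite /evC rmorph1 hornerC. Qed.
Lemma evCC c z : evC c%:P z = c%:~R.
Proof. by rewrite /evC map_polyC hornerC. Qed.
Lemma evCsum (I : finType) (F : I -> {poly int}) z :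
  evC (\sum_i F i) z = \sum_i evC (F i) z.
Proof. by rewrite /evC rmorph_sum /= horner_sum. Qed.

Lemma Q_fact m : odd m -> (('X^m + 1) %/ ('X + 1)) * ('X + 1) = 'X^m + 1 :> {poly int}.
Proof.
move=> om.
have : root ('X^m + 1 : {poly int}) (-1).
  by rewrite /root hornerD hornerXn hornerC -signr_odd om expr1 addNr.
case/factor_theorem => q ->.
have -> : ('X - (-1)%:P : {poly int}) = 'X + 1 by rewrite polyCN opprK polyC1.
rewrite Pdiv.IdomainMonic.mulpK //.
by rewrite -polyC1 monicXaddC.
Qed.

Lemma G_eq m t (a : 'I_t -> nat) y : odd m ->
  evC (Hpoly m a) y * (y + 1) = (y ^+ m + 1) * \sum_(i < t) y ^+ (a i).
Proof.
move=> om; rewrite /Hpoly evCM evCsum mulrAC.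
have -> : evC (('X^m + 1) %/ ('X + 1)) y * (y + 1) = y ^+ m + 1.
  by rewrite -(evCXn m y) -(evC1 y) -[y in _ * (y + _)]expr1 -evCXn -!evCD -evCM Q_fact.
by congr (_ * _); apply: eq_bigr => i _; rewrite evCXn.
Qed.

Lemma G_pow n p m t e (a : 'I_t -> nat) u : odd m -> u ^+ n = 1 ->
  (p * m = 1 %[mod n])%N -> (forall i : 'I_t, (p * a i = 2 * i + e %[mod n])%N) ->
  evC (Hpoly m a) (u ^+ p) * (u ^+ p + 1) = (u + 1) * Tsum t e u.
Proof.
move=> om hu hpm ha; rewrite G_eq // -exprM -(expr_mod _ hu) hpm (expr_mod _ hu) expr1.
congr (_ * _); apply: eq_bigr => i _.
by rewrite -exprM -(expr_mod _ hu) ha (expr_mod _ hu).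
Qed.

Lemma neqN1 n (y : algC) : odd n -> y ^+ n = 1 -> y + 1 != 0.
Proof.
move=> on hy; rewrite addr_eq0; apply/eqP => yN; move: hy.
rewrite yN -signr_odd on expr1 => /eqP; rewrite eq_sym -addr_eq0.
by rewrite -[1 + 1]/(2%:R) pnatr_eq0.
Qed.

Lemma term n p m t e (a : 'I_t -> nat) (d u : algC) :
  odd n -> odd m -> u ^+ n = 1 -> u != 1 ->
  (p * m = 1 %[mod n])%N -> (forall i : 'I_t, (p * a i = 2 * i + e %[mod n])%N) ->
  ((d = 1 /\ e = 1%N /\ p = (4 * t + 1)%N) \/ (d = -1 /\ e = 0%N /\ p.+1 = (4 * t)%N)) ->
  (1 + 2 * d * (evC (Hpoly m a) (u ^+ p) + evC (Hpoly m a) (u ^+ p)^-1)) *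
     ((u - 1) * (1 + u ^+ p)) = d * ((1 + u) * (u ^+ p - 1)).
Proof.
move=> on om hu u1 hpm ha hcase.
have n0 : (0 < n)%N by case: n on {hu hpm ha}.
have u0 : u != 0.
  by apply/eqP => u0; move: hu; rewrite u0 expr0n gtn_eqF // => /eqP; rewrite eq_sym oner_eq0.
have hA := @G_pow n p m t e a u om hu hpm ha.
have hui : u^-1 ^+ n = 1 by rewrite exprVn hu invr1.
have hB := @G_pow n p m t e a u^-1 om hui hpm ha; rewrite exprVn in hB.
have hT := Tsum_tel t e u.
have hTi := @Tsum_inv t e u u0.
set z := u ^+ p in hA hB *.
have hz : z ^+ n = 1 by rewrite /z -exprM mulnC exprM hu expr1n.
have z1 : z + 1 != 0 by apply: (@neqN1 n z on hz).
have hzi : z^-1 ^+ n = 1 by rewrite exprVn hz invr1.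
have zi1 : z^-1 + 1 != 0 by apply: (@neqN1 n z^-1 on hzi).
have uN1 : u + 1 != 0 by apply: (@neqN1 n u on hu).
have u2 : u ^+ 2 - 1 != 0.
  by rewrite subr_sqr_1 mulf_neq0 // subr_eq0.
set H := evC (Hpoly m a).
set T := Tsum t e u in hA hT hTi *; set Ti := Tsum t e u^-1 in hB hTi *.
have eA : H z = (u + 1) * T / (z + 1) by rewrite -hA mulfK.
have eB : H z^-1 = (u^-1 + 1) * Ti / (z^-1 + 1) by rewrite -hB mulfK.
have eTi : Ti = u ^+ 2 * T / u ^+ (2 * t + 2 * e) by rewrite -hTi mulfK ?expf_neq0.
have eT : T = (u ^+ (2 * t) - 1) * u ^+ e / (u ^+ 2 - 1) by rewrite -hT [_ * T]mulrC mulfK.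
rewrite eA eB eTi eT exprD.
have U0 : u ^+ (2 * t) != 0 by rewrite expf_neq0.
case: hcase => [[-> [ee hp]] | [-> [ee hp]]].
- have ez : z = u ^+ (2 * t) ^+ 2 * u by rewrite /z hp -exprM exprD expr1; congr (_ ^+ _ * _); lia.
  move: z1 zi1; rewrite ez ee; set U := u ^+ (2 * t) => z1 zi1.
  by field; rewrite u0 U0 addrC z1 u2.
- have ez : z = u ^+ (2 * t) ^+ 2 / u.
    apply: (mulIf u0); rewrite mulfVK // /z -exprSr hp -exprM; congr (_ ^+ _); lia.
  move: z1 zi1; rewrite ez ee; set U := u ^+ (2 * t) => z1 zi1.
  have e1 : u + U ^+ 2 = u * (U ^+ 2 / u + 1) by field.
  have hUu : u + U ^+ 2 != 0 by rewrite e1 mulf_neq0.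
  by field; rewrite u0 U0 hUu u2.
Qed.

Lemma reindexp (n p m : nat) (F : nat -> algC) : (0 < n)%N ->
  (p * m = 1 %[mod n])%N -> (forall k, F (k %% n)%N = F k) ->
  \prod_(j < n | (0 < j)%N) F (j * p)%N = \prod_(j < n | (0 < j)%N) F j.
Proof.
move=> n0 hpm hF.
have key : forall j : 'I_n, (j : nat) = (((j * p %% n) * m) %% n)%N.
  move=> j; rewrite modnMml -mulnA -modnMmr hpm modnMmr muln1 modn_small //.
pose h (j : 'I_n) : 'I_n := Ordinal (ltn_pmod (j * p) n0).
have hinj : injective h.
  move=> i j /(congr1 val) /= hij; apply: val_inj => /=.
  by rewrite (key i) (key j) hij.
rewrite [RHS](reindex_inj hinj) /=; apply: eq_big => j.
  case: j => [[|j] jn] //=.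
  - by rewrite mul0n mod0n.
  - symmetry; rewrite lt0n; apply/eqP => h0.
    by move: (key (Ordinal jn)) => /=; rewrite h0 mul0n mod0n.
by move=> _; rewrite hF.
Qed.

Lemma prod_double (R : comPzRingType) (N : nat) (F : nat -> R) :
  \prod_(k < (2 * N)%N) F k = \prod_(j < N) (F (2 * j)%N * F (2 * j).+1).
Proof.
rewrite -(big_mkord xpredT F) -(big_mkord xpredT (fun j => F (2 * j)%N * F (2 * j).+1)).
elim: N => [|N IH]; first by rewrite muln0 !big_geq.
have -> : (2 * N.+1 = (2 * N).+2)%N by lia.
by rewrite !big_nat_recr //= IH mulrA.
Qed.

Unset Implicit Arguments.

Theorem lemma5p3 (n p m t : nat) (delta : int) (a : 'I_t -> nat) (w : algC) :
  odd n -> prime p -> odd p -> ~~ (p %| n)%N ->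
  (delta = 1 \/ delta = -1) ->
  p%:Z - delta = 4 * t%:Z ->
  odd m -> (p * m = 1 %[mod n])%N ->
  (forall i : 'I_t,
     (p * a i = (if delta == 1 then (2 * i).+1 else 2 * i) %[mod n])%N) ->
  (2 * n)%N.-primitive_root w ->
  MQ n w (delta%:P + ('X^n + 1) * Hpoly m a) (('X^n + 1) * Hpoly m a)
    = (delta * p%:Z)%:~R.
Proof.
move=> on pp op pn hd hpt om hpm ha wp.
have n0 : (0 < n)%N by case: n on {pn hpm ha wp}.
set e : nat := if delta == 1 then 1%N else 0%N.
have ha' : forall i : 'I_t, (p * a i = 2 * i + e %[mod n])%N.
  by move=> i; rewrite ha /e; case: hd => -> //=; rewrite ?addn1 ?addn0.
set dC : algC := delta%:~R.
have hcase : (dC = 1 /\ e = 1%N /\ p = (4 * t + 1)%N) \/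
             (dC = -1 /\ e = 0%N /\ p.+1 = (4 * t)%N).
  rewrite /dC /e; case: hd hpt => -> hpt; [left | right]; split => //; split => //; lia.
have dC2 : dC * dC = 1 by case: hcase => [[-> _] | [-> _]]; rewrite ?mulr1 ?mulrNN ?mulr1.
have w2n : w ^+ (2 * n) = 1 by apply: prim_expr_order.
have wn : w ^+ n = -1.
  have : w ^+ n != 1.
    by rewrite -(prim_order_dvd wp); apply/negP => /(dvdn_leq n0); lia.
  have : (w ^+ n) ^+ 2 == 1 by rewrite -exprM mulnC w2n.
  by rewrite sqrf_eq1 => /orP [/eqP -> /eqP // | /eqP].
set v := w ^+ 2.
have vn : v ^+ n = 1 by rewrite /v -exprM w2n.
set H := evC (Hpoly m a).
set Fv := fun y : algC => 1 + 2 * dC * (H y + H y^-1).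
set f := delta%:P + ('X^n + 1) * Hpoly m a.
set g := ('X^n + 1) * Hpoly m a.
pose Fk := fun k : nat => let z := w ^+ k in evC f z * evC f z^-1 - z ^+ n * evC g z * evC g z^-1.
have -> : MQ n w f g = \prod_(k < (2 * n)%N) Fk k by [].
rewrite prod_double.
have hFk : forall k, Fk k = evC f (w ^+ k) * evC f (w ^+ k)^-1 -
    (w ^+ k) ^+ n * evC g (w ^+ k) * evC g (w ^+ k)^-1 by [].
have evf : forall y, evC f y = dC + (y ^+ n + 1) * H y.
  by move=> y; rewrite /f evCD evCC evCM evCD evCXn evC1.
have evg : forall y, evC g y = (y ^+ n + 1) * H y.
  by move=> y; rewrite /g evCM evCD evCXn evC1.
have hodd : forall j : nat, Fk (2 * j).+1 = 1.
  move=> j; rewrite hFk !evf !evg.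
  have zn : (w ^+ (2 * j).+1) ^+ n = -1.
    by rewrite -exprM mulnC exprM wn -signr_odd /= mul2n odd_double expr1.
  rewrite exprVn zn invrN1 addNr -dC2; ring.
have heven : forall j : nat, Fk (2 * j)%N = Fv (v ^+ j).
  move=> j; rewrite hFk !evf !evg /Fv.
  have -> : w ^+ (2 * j) = v ^+ j by rewrite /v exprM.
  have zn : (v ^+ j) ^+ n = 1 by rewrite -exprM mulnC exprM vn expr1n.
  rewrite exprVn zn invr1.
  transitivity (dC * dC + 2 * dC * (H (v ^+ j) + H (v ^+ j)^-1)); first by ring.
  by rewrite dC2.
rewrite (eq_bigr (fun j : 'I_n => Fv (v ^+ j))); last by move=> j _; rewrite hodd heven mulr1.
pose i0 : 'I_n := Ordinal n0.
have hpred : forall j : 'I_n, (j != i0) = (0 < j)%N.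
  by move=> j; rewrite lt0n -(inj_eq val_inj).
have hvj : forall j : 'I_n, (0 < j)%N -> v ^+ j != 1.
  move=> j j0; rewrite /v -exprM -(prim_order_dvd wp) dvdn_pmul2l //.
  by apply/negP => /(dvdn_leq j0); rewrite leqNgt ltn_ord.
have hvp : forall k, (v ^+ k) ^+ n = 1 by move=> k; rewrite -exprM mulnC exprM vn expr1n.
have hnz : forall k, 1 + v ^+ k != 0.
  by move=> k; rewrite addrC; apply: (@neqN1 n); [exact: on | exact: hvp].
have hd1 : \prod_(j < n | (0 < j)%N) dC = 1.
  have hall : \prod_(j < n) dC = dC.
    rewrite prodr_const card_ord; case: hcase => [[-> _] | [-> _]]; first by rewrite expr1n.
    by rewrite -signr_odd on expr1.
  have d0 : dC != 0 by apply/eqP => d0; move: dC2; rewrite d0 mul0r => /eqP; rewrite eq_sym oner_eq0.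
  move: hall; rewrite (bigD1 i0) //= (eq_bigl _ _ hpred) => h.
  by apply: (mulfI d0); rewrite h mulr1.
have R1 : \prod_(j < n | (0 < j)%N) Fv (v ^+ j) = 1.
  set D := \prod_(j < n | (0 < j)%N) ((v ^+ j - 1) * (1 + v ^+ (j * p))).
  have D0 : D != 0.
    by apply/prodf_neq0 => j j0; rewrite mulf_neq0 ?subr_eq0 ?hvj ?hnz.
  apply: (mulIf D0); rewrite mul1r.
  rewrite -(@reindexp n p m (fun k => Fv (v ^+ k)) n0 hpm); last by move=> k; rewrite (expr_mod _ vn).
  rewrite /D -big_split /=.
  rewrite (eq_bigr (fun j : 'I_n => dC * ((1 + v ^+ j) * (v ^+ (j * p) - 1)))); last first.
    move=> j j0; rewrite exprM.
    exact: (@term n p m t e a dC (v ^+ j) on om (hvp j) (hvj j j0) hpm ha' hcase).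
  rewrite !big_split /= hd1 mul1r.
  rewrite (@reindexp n p m (fun k => v ^+ k - 1) n0 hpm); last by move=> k; rewrite (expr_mod _ vn).
  rewrite -(@reindexp n p m (fun k => 1 + v ^+ k) n0 hpm); last by move=> k; rewrite (expr_mod _ vn).
  by rewrite mulrC.
rewrite (bigD1 i0) //= (eq_bigl _ _ hpred) R1 mulr1 /Fv expr0 invr1.
have H1 : H 1 = t%:R.
  have := @G_eq m t a 1 om; rewrite -/H expr1n.
  rewrite (eq_bigr (fun _ => 1)); last by move=> i _; rewrite expr1n.
  rewrite sumr_const card_ord => h.
  have two0 : (1 + 1 : algC) != 0 by rewrite -[1 + 1]/(2%:R) pnatr_eq0.
  apply: (mulIf two0).
  by rewrite h mulrC.
rewrite H1 intrM pmulrn -/dC.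
case: hcase => [[-> [_ hp]] | [-> [_ hp]]].
- rewrite hp; ring.
- have : (p.+1)%:R = (4 * t)%:R :> algC by rewrite hp.
  rewrite -addn1 natrD natrM => hp'.
  transitivity (1 - 4 * t%:R : algC); first by ring.
  rewrite -hp'; ring.
Qed.
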